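(* Let $\gamma\in(0,1)$, $T\ge1$, and let $Z_1,\dots,Z_T$ be i.i.d. geometric random variables with parameter $1-\gamma$, i.e. with values in $\{1,2,\dots\}$ and $\mathbb P(Z_j>i)=\gamma^i$ for all integers $i\ge0$. Then $$\mathbb E\Big[\max_{j\in[T]}\frac{Z_j}{\log(1+Z_j)}\Big]\le\frac{4+2\log T}{1-\gamma}.$$ *)

(* Defs.v *)
From HB Require Import structures.
From mathcomp Require Import all_boot all_order all_algebra.
From mathcomp Require Import all_classical all_reals all_analysis.
Set Implicit Arguments. Unset Strict Implicit. Unset Printing Implicit Defensive.
Import Order.TTheory GRing.Theory Num.Theory.
Local Open Scope classical_set_scope.
Local Open Scope ring_scope.

(* Mutual independence of a finite family of real random variables:
   for every family of Borel sets B_j, the joint probability factorizes.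
   (Taking B_j = setT for j outside a subfamily J recovers the product rule
   for every subfamily.) *)
Definition mutually_independent d (Om : measurableType d) (R : realType)
  (P : probability Om R) (n : nat) (Z : 'I_n -> {RV P >-> R}) : Prop :=
  forall B : 'I_n -> set R, (forall j, measurable (B j)) ->
    P (\bigcap_(j in [set: 'I_n]) (Z j @^-1` B j)) =
    (\prod_(j < n) P (Z j @^-1` B j))%E.

Definition geometric_rv d (Om : measurableType d) (R : realType)
  (P : probability Om R) (g : R) (Z : {RV P >-> R}) : Prop :=
  (forall x, exists k : nat, Z x = k.+1%:R) /\
  (forall i : nat, P [set x | i%:R < Z x] = (g ^+ i)%:E).

(* max_{j in [T]} Z_j / log(1 + Z_j), pointwise (values are positive, so the
   initial 0 of the fold is harmless for n >= 1). *)
Definition max_ratio d (Om : measurableType d) (R : realType)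
  (P : probability Om R) (n : nat) (Z : 'I_n -> {RV P >-> R}) (x : Om) : R :=
  \big[Num.max/0]_(j < n) (Z j x / ln (1 + Z j x)).

(* Main.v *)
Require Import Defs.
From HB Require Import structures.
From mathcomp Require Import all_boot all_order all_algebra.
From mathcomp Require Import all_classical all_reals all_analysis.
From mathcomp Require Import lra ring measurable_realfun.
Import Order.TTheory GRing.Theory Num.Theory.
Local Open Scope classical_set_scope.
Local Open Scope ring_scope.
Lemma ln_half {R : realType} (y : R) : 1 <= y -> 1/2 <= ln (1 + y).
Proof.
move=> y1.
have hp : 0 < 1 + y by lra.
have := expR_ge1Dx (- ln (1 + y)).
rewrite expRN lnK ?posrE // => h.
have h2 : (1 + y)^-1 <= 2^-1.
  rewrite lef_pV2 ?posrE //; lra.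
have := le_trans h h2. lra.
Qed.
Lemma ratio_le {R : realType} (z : R) : 1 <= z -> z / ln (1 + z) <= 2 * z.
Proof.
move=> z1; have h := @ln_half _ z z1.
have lp : 0 < ln (1 + z) by lra.
rewrite ler_pdivrMr // -mulrA.
have z0 : 0 <= z by lra.
nra.
Qed.
Lemma pw_real {R : realType} {T : nat} (k : nat) (F : 'I_T -> R) : (forall j, 1 <= F j) ->
  \big[Num.max/0]_(j < T) (F j / ln (1 + F j)) <=
  2 * (k%:R + \sum_(j < T) Num.max 0 (F j - k%:R)).
Proof.
move=> F1.
have s0 : 0 <= \sum_(j < T) Num.max 0 (F j - k%:R).
  by apply: sumr_ge0 => j _; rewrite le_max lexx.
apply/bigmax_leP; split.
  have : 0 <= k%:R :> R by rewrite ler0n.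
  rewrite /=; lra.
move=> j _ /=.
apply: (le_trans (@ratio_le _ _ (F1 j))).
rewrite (bigD1 j) //=.
have r0 : 0 <= \sum_(i < T | i != j) Num.max 0 (F i - k%:R).
  by apply: sumr_ge0 => i _; rewrite le_max lexx.
have : F j - k%:R <= Num.max 0 (F j - k%:R) by rewrite le_max lexx orbT.
lra.
Qed.
Definition wfun {R : realType} (z : R) : R := (ln (1 + Num.max z 1))^-1.

Lemma wfun_meas (R : realType) : measurable_fun setT (@wfun R).
Proof.
apply: measurable_realfun.nonincreasing_measurable => // s t st.
have h1 : forall u : R, 0 < ln (1 + Num.max u 1).
  move=> u; apply: ln_gt0.
  have : 1 <= Num.max u 1 by rewrite le_max lexx orbT.
  lra.
rewrite /wfun lef_pV2 ?posrE ?h1 //.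
rewrite ler_ln ?posrE.
- by rewrite lerD2l ge_max !le_max st lexx !orbT.
- have : 1 <= Num.max s 1 by rewrite le_max lexx orbT. lra.
- have : 1 <= Num.max t 1 by rewrite le_max lexx orbT. lra.
Qed.

Lemma big_meas {d} {Om : measurableType d} {R : realType} (I : Type) (s : seq I) (Q : pred I)
  (F : I -> Om -> R) : (forall i, measurable_fun setT (F i)) ->
  measurable_fun setT (fun x => \big[Num.max/0]_(i <- s | Q i) F i x).
Proof.
move=> mF; elim: s => [|a s IH].
  by under eq_fun do rewrite big_nil; exact: measurable_cst.
under eq_fun do rewrite big_cons.
case: (Q a) => //; exact: measurable_realfun.measurable_maxr.
Qed.
Lemma geo_part (R : realType) (g : R) (k n : nat) :
  (1 - g) * \sum_(0 <= i < n) g ^+ (i + k) = g ^+ k - g ^+ (n + k).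
Proof.
elim: n => [|n IH]; first by rewrite big_geq // mulr0 add0n subrr.
rewrite big_nat_recr //= mulrDr IH addSn exprS.
ring.
Qed.

Lemma geo_bound {R : realType} (g : R) (k : nat) : 0 <= g < 1 ->
  (\sum_(i <oo) ((g ^+ (i + k))%:E) <= (g ^+ k / (1 - g))%:E)%E.
Proof.
move=> /andP[g0 g1].
apply: lime_le.
  by apply: is_cvg_nneseries => n _ _; rewrite lee_fin exprn_ge0.
apply: nearW => n /=.
rewrite sumEFin lee_fin ler_pdivlMr ?subr_gt0 // mulrC.
rewrite geo_part lerBlDr lerDl exprn_ge0 //.
Qed.
Lemma kchoice {R : realType} (g : R) (T : nat) : 0 < g < 1 -> (1 <= T)%N ->
  exists k : nat, T%:R * g ^+ k <= 1 /\ k%:R <= ln T%:R / (1 - g) + 1.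
Proof.
move=> /andP[g0 g1] T1.
have T1' : 1 <= T%:R :> R by rewrite ler1n.
have L0 : 0 <= ln (T%:R : R) by exact: ln_ge0.
have x0 : 0 <= ln (T%:R : R) / (1 - g) by rewrite divr_ge0 // subr_ge0 ltW.
have /andP[tl tu] := truncn_itv x0.
set x := ln (T%:R : R) / (1 - g) in x0 tl tu *.
exists (Num.truncn x).+1; split; last by rewrite -addn1 natrD; lra.
set k := (Num.truncn x).+1 in tu *.
have gk : g ^+ k <= expR (k%:R * (g - 1)).
  rewrite expRM_natl; apply: (@lerXn2r R k g (expR (g - 1))); rewrite ?nnegrE ?expR_ge0 //; first exact: ltW.
  have := expR_ge1Dx (g - 1); clear; lra.
have h : k%:R * (g - 1) <= - ln (T%:R : R).
  have : ln (T%:R : R) <= k%:R * (1 - g).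
    by rewrite -ler_pdivrMr ?subr_gt0 // ltW.
  clear; lra.
have : expR (k%:R * (g - 1)) <= (T%:R : R)^-1.
  have e : (T%:R : R)^-1 = expR (- ln (T%:R : R)).
    by rewrite expRN lnK // posrE ltr0n.
  by rewrite e ler_expR.
move=> h2; have := le_trans gk h2 => h3.
have Tp : 0 < T%:R :> R by rewrite ltr0n.
apply: (le_trans (ler_wpM2l (ltW Tp) h3)).
by rewrite mulfV // lt0r_neq0.
Qed.
Lemma maxsub {R : realType} (m k : nat) : Num.max 0 (m%:R - k%:R) <= (m - k)%:R :> R.
Proof.
rewrite ge_max ler0n /=; case: (leqP k m) => h.
  by rewrite natrB.
rewrite (_ : (m - k)%N = 0%N); last by apply/eqP; rewrite subn_eq0 ltnW.
by rewrite subr_le0 ler_nat ltnW.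
Qed.

Lemma pw_series {d} {Om : measurableType d} {R : realType} (X : Om -> R) (k m : nat) x :
  X x = m%:R ->
  ((Num.max 0 (X x - k%:R))%:E <=
   \sum_(i <oo) (\1_[set y | ((i + k)%:R < X y)] x)%:E)%E.
Proof.
move=> Xm.
apply: (@le_trans _ _ ((m - k)%:R)%:E); first by rewrite lee_fin Xm maxsub.
apply: (@le_trans _ _ (\sum_(0 <= i < m - k) (\1_[set y | ((i + k)%:R < X y)] x)%:E)%E); last first.
  by apply: nneseries_lim_ge => n _ _; rewrite lee_fin indicE ler0n.
rewrite (eq_big_nat _ _ (F2 := fun=> 1%E)); last first.
  move=> i /andP[_ hi]; rewrite indicE mem_set //= Xm ltr_nat.
  by rewrite addnC -ltn_subRL.
by rewrite sumEFin sumr_const_nat subn0.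
Qed.

Lemma mA {d} {Om : measurableType d} {R : realType} (X : Om -> R)
  (mX : measurable_fun setT X) (r : R) : measurable [set x | r < X x].
Proof.
have mi : measurable (`]r, +oo[%classic : set R) by exact: measurable_itv.
have := mX measurableT _ mi.
rewrite setTI; congr measurable; apply/seteqP; split => x /=; rewrite in_itv /= andbT //.
Qed.

Theorem mainTheorem12 (d : measure_display) (Om : measurableType d)
  (R : realType) (P : probability Om R) (g : R) (T : nat)
  (Z : 'I_T -> {RV P >-> R}) :
  0 < g < 1 -> (1 <= T)%N ->
  mutually_independent Z ->
  (forall j, geometric_rv g (Z j)) ->
  (\int[P]_x (max_ratio Z x)%:E <=
     ((4 + 2 * ln T%:R) / (1 - g))%:E)%E.
Proof.
move=> g01 T1 _ geo.
have [k [Tk kb]] := @kchoice _ g T g01 T1.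
have /andP[g0 g1] := g01.
have Zm j x : exists m : nat, Z j x = m.+1%:R by case: (geo j) => H _; exact: H.
have Zge1 j x : 1 <= Z j x by have [m ->] := Zm j x; rewrite ler1n.
pose A j i := [set x | ((i + k)%:R < Z j x)].
have mAji j i : measurable (A j i) by apply: mA; exact: measurable_funPT.
pose F x : \bar R := ((2 * k%:R)%:E + \sum_(j < T) ((2 : R)%:E * \sum_(i <oo) (\1_(A j i) x : R)%:E))%E.
have mF : measurable_fun [set: Om] (fun x => F x).
  apply: emeasurable_funD; first exact: measurable_cst.
  apply: emeasurable_sum => j; apply: measurable_funeM.
  apply: ge0_emeasurable_sum => [i x _ _|i _]; first by rewrite lee_fin indicE ler0n.
  by apply/measurable_EFinP; exact: measurable_indic.
have mM : measurable_fun setT (fun x => (max_ratio Z x)%:E).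
  apply/measurable_EFinP.
  have -> : max_ratio Z = fun x => \big[Num.max/0]_(j <- index_enum 'I_T | true) (Z j x * wfun (Z j x)).
    apply/funext => x; rewrite /max_ratio; apply: eq_bigr => j _.
    by rewrite /wfun max_l ?Zge1.
  apply: big_meas => j; apply: measurable_funM; first exact: measurable_funPT.
  exact: measurableT_comp (wfun_meas R) (measurable_funPT (Z j)).
apply: (@le_trans _ _ (\int[P]_x F x)%E).
  apply: ge0_le_integral => //.
    by move=> x _; rewrite lee_fin /max_ratio bigmax_ge_id.
  move=> x _.
  have h := pw_real k (fun j => Z j x) (fun j => Zge1 j x).
  apply: (@le_trans _ _ ((2 * (k%:R + \sum_(j < T) Num.max 0 (Z j x - k%:R)))%:E)).
    by rewrite lee_fin.
  rewrite mulrDr EFinD mulr_sumr -sumEFin.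
  apply: leeD => //; apply: lee_sum => j _; rewrite EFinM.
  apply: lee_wpmul2l; first by rewrite lee_fin.
  have [m Zjm] := Zm j x.
  exact: pw_series Zjm.
have ind0 : forall j i x, (0 <= (\1_(A j i) x : R)%:E)%E.
  by move=> j i x; rewrite lee_fin indicE ler0n.
have ser0 : forall j x, (0 <= \sum_(i <oo) (\1_(A j i) x : R)%:E)%E.
  by move=> j x; apply: nneseries_ge0 => i _ _; exact: ind0.
have mind : forall j i, measurable_fun setT (fun x => (\1_(A j i) x : R)%:E).
  by move=> j i; apply/measurable_EFinP; exact: measurable_indic.
have mser : forall j, measurable_fun setT (fun x => \sum_(i <oo) (\1_(A j i) x : R)%:E)%E.
  by move=> j; apply: ge0_emeasurable_sum => [i x _ _|i _]; [exact: ind0|exact: mind].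
have t0 : (0 <= (2 : R)%:E)%E by rewrite lee_fin.
have IF : (\int[P]_x F x = (2 * k%:R)%:E + \sum_(j < T) ((2 : R)%:E * \sum_(i <oo) (g ^+ (i + k))%:E))%E.
  rewrite ge0_integralD //; last first.
  - by apply: emeasurable_sum => j; apply: measurable_funeM; exact: mser.
  - by move=> x _; apply: sume_ge0 => j _; apply: mule_ge0.
  rewrite integral_cst //.
  rewrite [X in (_ * X)%E](_ : _ = 1%E); last exact: probability_setT.
  rewrite mule1; congr (_ + _)%E.
  rewrite ge0_integral_sum //; last first.
  - by move=> j x _; apply: mule_ge0.
  - by move=> j; apply: measurable_funeM; exact: mser.
  apply: eq_bigr => j _.
  rewrite ge0_integralZl //; try by move=> x _; exact: ser0.
  congr (_ * _)%E.
  rewrite integral_nneseries //.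
  apply: congr_lim; apply/funext => n; apply: eq_bigr => i _.
  rewrite integral_indic // setIT.
  by case: (geo j) => _ H; exact: H.
rewrite IF.
apply: (@le_trans _ _ ((2 * k%:R)%:E + \sum_(j < T) (2%:E * (g ^+ k / (1 - g))%:E))%E).
  apply: leeD => //; apply: lee_sum => j _; apply: lee_wpmul2l; first by rewrite lee_fin.
  by apply: geo_bound; rewrite ltW.
rewrite -EFinM sumEFin -EFinD lee_fin sumr_const card_ord.
set L := ln (T%:R : R) in kb *.
have a0 : 0 < 1 - g by rewrite subr_gt0.
set a := 1 - g in a0 kb *.
rewrite -mulr_natl.
have a1 : a <= 1 by rewrite /a; clear -g0; lra.
set ia := a^-1 in kb *.
have ia1 : 1 <= ia by rewrite /ia invf_ge1.
have p : 0 <= (1 - T%:R * g ^+ k) * ia.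
  by apply: mulr_ge0; [rewrite subr_ge0 | rewrite (le_trans ler01)].
move: kb Tk ia1 p; clear; nra.
Qed.
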